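(* Let $\mathbb{A},\mathbb{B}$ be real square matrices of the same size such that $\mathbb{A}$ is a non-singular symmetric matrix with exactly one negative eigenvalue and $\mathbb{A}\mathbb{B}$ is skew-symmetric. Then $\mathbb{A}+\mathbb{B}$ is invertible and has exactly one negative eigenvalue, whose geometric multiplicity is $1$. *)

(* Defs.v *)
From HB Require Import structures.
From mathcomp Require Import all_boot all_order all_algebra.
From mathcomp Require Import reals.
Set Implicit Arguments. Unset Strict Implicit. Unset Printing Implicit Defensive.
Import Order.TTheory GRing.Theory Num.Theory.
Local Open Scope ring_scope.

Definition symmetric_mx (R : realType) (n : nat) (A : 'M[R]_n) : Prop :=
  A^T = A.
Definition skew_mx (R : realType) (n : nat) (A : 'M[R]_n) : Prop :=
  A^T = - A.

(* A has exactly one negative eigenvalue, counted with (algebraic)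
   multiplicity: there is a unique negative real eigenvalue, and it is a
   simple root of the characteristic polynomial. *)
Definition one_neg_eig_with_mult (R : realType) (n : nat) (A : 'M[R]_n) : Prop :=
  exists l : R, [/\ l < 0, eigenvalue A l,
    (forall m : R, m < 0 -> eigenvalue A m -> m = l)
    & mup l (char_poly A) = 1%N].

Definition one_neg_eig_geom1 (R : realType) (n : nat) (A : 'M[R]_n) : Prop :=
  exists l : R, [/\ l < 0, eigenvalue A l,
    (forall m : R, m < 0 -> eigenvalue A m -> m = l)
    & \rank (eigenspace A l) = 1%N].

(* Main.v *)
Require Import Defs.
From HB Require Import structures.
From mathcomp Require Import all_boot all_order all_algebra.
From mathcomp Require Import reals ring lra complex polyrcf.
Import Order.TTheory GRing.Theory Num.Theory.
Local Open Scope ring_scope.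

Lemma sq_pos (R : realDomainType) (x : R) : x != 0 -> 0 < x ^+ 2.
Proof. by move=> h; rewrite lt_def sqrf_eq0 h sqr_ge0. Qed.

Lemma quad_pos (R : realFieldType) (P Q T a b : R) : 0 < P -> Q^+2 < P * T ->
  (a != 0) || (b != 0) -> 0 < P * a^+2 + 2 * Q * a * b + T * b^+2.
Proof.
move=> P0 D ab.
have E : P * (P * a^+2 + 2 * Q * a * b + T * b^+2) = (P * a + Q * b)^+2 + (P * T - Q^+2) * b^+2 by ring.
rewrite -(pmulr_rgt0 _ P0) E.
case/orP: ab => [a0|b0].
- have [->|b0] := eqVneq b 0.
    rewrite expr0n /= mulr0 addr0 mulr0 addr0 exprMn; apply: mulr_gt0; apply: sq_pos => //.
    by rewrite gt_eqF.
  apply: ltr_wpDl; first exact: sqr_ge0.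
  by apply: mulr_gt0; [lra| exact: sq_pos].
- apply: ltr_wpDl; first exact: sqr_ge0.
  by apply: mulr_gt0; [lra| exact: sq_pos].
Qed.

Lemma RA (R : realFieldType) (l1 l2 q1 q2 c n1 n2 p a b : R) : l1 < 0 -> l2 < 0 ->
  0 <= n1 -> 0 <= n2 ->
  n1 = l1 * q1 -> n2 = l2 * q2 -> 2 * p = (l1 + l2) * c -> p ^+ 2 < n1 * n2 -> (a != 0) || (b != 0) ->
  a ^+ 2 * q1 + 2 * a * b * c + b ^+ 2 * q2 < 0.
Proof.
move=> l10 l20 n10 n20 e1 e2 e3 cs ab.
set m1 := - l1; set m2 := - l2; set s := m1 + m2.
have m10 : 0 < m1 by rewrite /m1; lra.
have m20 : 0 < m2 by rewrite /m2; lra.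
have s0 : 0 < s by rewrite /s; lra.
have n1p : 0 < n1.
  rewrite lt_def n10 andbT; apply/negP => /eqP h; move: cs; rewrite h mul0r.
  by move=> cs; have := sqr_ge0 p; lra.
have n2p : 0 < n2.
  rewrite lt_def n20 andbT; apply/negP => /eqP h; move: cs; rewrite h mulr0.
  by move=> cs; have := sqr_ge0 p; lra.
have key := @quad_pos R (n1 * m2 * s) (2 * p * m1 * m2) (n2 * m1 * s) a b.
have P0 : 0 < n1 * m2 * s by rewrite !mulr_gt0.
have hs : 4 * m1 * m2 <= s ^+ 2.
  have := sqr_ge0 (m1 - m2); rewrite /s; nra.
have D : (2 * p * m1 * m2) ^+ 2 < n1 * m2 * s * (n2 * m1 * s).
  have hm : 0 < m1 * m2 by rewrite mulr_gt0.
  have h1 : (2 * p * m1 * m2) ^+ 2 = 4 * m1 * m2 * (p ^+ 2 * (m1 * m2)) by ring.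
  have h2 : n1 * m2 * s * (n2 * m1 * s) = (n1 * n2) * (m1 * m2) * s^+2 by ring.
  rewrite h1 h2.
  have : p^+2 * (m1 * m2) < n1 * n2 * (m1 * m2) by rewrite ltr_pM2r.
  have : 0 <= p ^+ 2 * (m1 * m2) by rewrite mulr_ge0 ?sqr_ge0 ?ltW.
  nra.
have := key P0 D ab.
have E : n1 * m2 * s * a ^+ 2 + 2 * (2 * p * m1 * m2) * a * b + n2 * m1 * s * b ^+ 2
   = - (m1 * m2 * s) * (a ^+ 2 * q1 + 2 * a * b * c + b ^+ 2 * q2).
  rewrite /s /m1 /m2 e1 e2. 
  have -> : 2 * (2 * p * - l1 * - l2) * a * b = 2 * p * (2 * l1 * l2 * a * b) by ring.
  rewrite e3; ring.
rewrite E => h.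
have hm : 0 < m1 * m2 * s by rewrite !mulr_gt0.
rewrite mulNr oppr_gt0 in h.
by rewrite -(pmulr_rlt0 _ hm).
Qed.

Section Real.
Variable (R : realType) (n : nat).
Implicit Types (u v x z : 'rV[R]_n) (M : 'M[R]_n).

Definition bf M x z : R := (x *m M *m z^T) 0 0.
Definition dotr u v : R := (u *m v^T) 0 0.

Lemma bfDl M x1 x2 z : bf M (x1 + x2) z = bf M x1 z + bf M x2 z.
Proof. by rewrite /bf !mulmxDl mxE. Qed.
Lemma bfZl M a x z : bf M (a *: x) z = a * bf M x z.
Proof. by rewrite /bf -!scalemxAl mxE. Qed.
Lemma bfDr M x z1 z2 : bf M x (z1 + z2) = bf M x z1 + bf M x z2.
Proof. by rewrite /bf linearD /= mulmxDr mxE. Qed.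
Lemma bfZr M a x z : bf M x (a *: z) = a * bf M x z.
Proof. by rewrite /bf linearZ /= -scalemxAr mxE. Qed.
Lemma bfT M x z : bf M x z = bf M^T z x.
Proof.
rewrite /bf -[in LHS](trmxK (x *m M *m z^T)) mxE !trmx_mul trmxK.
by rewrite mulmxA.
Qed.
Lemma bfD M1 M2 x z : bf (M1 + M2) x z = bf M1 x z + bf M2 x z.
Proof. by rewrite /bf mulmxDr mulmxDl mxE. Qed.

Lemma dotrE u v : dotr u v = \sum_i u 0 i * v 0 i.
Proof. by rewrite /dotr !mxE; apply: eq_bigr => i _; rewrite mxE. Qed.
Lemma dotr_bf u v : dotr u v = bf 1%:M u v.
Proof. by rewrite /bf /dotr mulmx1. Qed.

Lemma dotrC u v : dotr u v = dotr v u.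
Proof. by rewrite !dotr_bf bfT trmx1. Qed.
Lemma dotrDl u1 u2 v : dotr (u1 + u2) v = dotr u1 v + dotr u2 v.
Proof. by rewrite !dotr_bf bfDl. Qed.
Lemma dotrDr u v1 v2 : dotr u (v1 + v2) = dotr u v1 + dotr u v2.
Proof. by rewrite !dotr_bf bfDr. Qed.
Lemma dotrZl a u v : dotr (a *: u) v = a * dotr u v.
Proof. by rewrite !dotr_bf bfZl. Qed.
Lemma dotrZr a u v : dotr u (a *: v) = a * dotr u v.
Proof. by rewrite !dotr_bf bfZr. Qed.
Lemma dotrNl u v : dotr (- u) v = - dotr u v.
Proof. by rewrite -scaleN1r dotrZl mulN1r. Qed.
Lemma dotrNr u v : dotr u (- v) = - dotr u v.
Proof. by rewrite -scaleN1r dotrZr mulN1r. Qed.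

Lemma dotr_ge0 u : 0 <= dotr u u.
Proof. by rewrite dotrE; apply: sumr_ge0 => i _; rewrite -expr2 sqr_ge0. Qed.

Lemma dotr_gt0 u : u != 0 -> 0 < dotr u u.
Proof.
move=> u0; rewrite lt_def dotr_ge0 andbT; apply: contra u0 => /eqP.
rewrite dotrE => /eqP; rewrite psumr_eq0 => [/allP h|i _]; last by rewrite -expr2 sqr_ge0.
apply/eqP/rowP => i; rewrite mxE.
by have /(_ (mem_index_enum i)) := h i; rewrite implyTb -expr2 sqrf_eq0 => /eqP.
Qed.

Definition indep u v := forall a b : R, a *: u + b *: v = 0 -> a = 0 /\ b = 0.

Lemma cs_strict u v : indep u v -> dotr u v ^+ 2 < dotr u u * dotr v v.
Proof.
move=> hi.
have u0 : u != 0.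
  apply/eqP => u0; have := hi 1 0; rewrite u0 scaler0 scale0r addr0 => /(_ erefl) [].
  by move/eqP; rewrite oner_eq0.
set n1 := dotr u u; set n2 := dotr v v; set p := dotr u v.
have n1p : 0 < n1 by exact: dotr_gt0.
set w := n1 *: v - p *: u.
have w0 : w != 0.
  apply/eqP => w0; have := hi (- p) n1; rewrite addrC scaleNr -/w w0.
  by move=> /(_ erefl) [_ h]; move: n1p; rewrite h ltxx.
have := @dotr_gt0 w w0.
have -> : dotr w w = n1 * (n1 * n2 - p ^+ 2).
  rewrite /w !(dotrDl, dotrDr, dotrNl, dotrNr, dotrZl, dotrZr) (dotrC v u) -/n1 -/n2 -/p.
  ring.
by rewrite pmulr_rgt0 // subr_gt0.
Qed.


Lemma RL A S y1 y2 l1 l2 : A^T = A -> S^T = - S ->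
  y1 *m (A *m A + S) = l1 *: (y1 *m A) -> y2 *m (A *m A + S) = l2 *: (y2 *m A) ->
  l1 < 0 -> l2 < 0 -> indep (y1 *m A) (y2 *m A) ->
  forall a b, (a != 0) || (b != 0) -> bf A (a *: y1 + b *: y2) (a *: y1 + b *: y2) < 0.
Proof.
move=> sA sS e1 e2 l10 l20 hi a b ab.
set N := A *m A + S.
have key (x z : 'rV_n) : bf N x z + bf N z x = 2 * dotr (x *m A) (z *m A).
  rewrite [bf N z x]bfT /N linearD /= sS trmx_mul sA !bfD.
  rewrite /bf /dotr trmx_mul sA mulmxN mulNmx !mulmxA; set t := (x *m S *m z^T); rewrite [(- t) 0 0]mxE; ring.
have ev1 (x : 'rV_n) : bf N y1 x = l1 * bf A y1 x by rewrite /bf e1 -scalemxAl mxE.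
have ev2 (x : 'rV_n) : bf N y2 x = l2 * bf A y2 x by rewrite /bf e2 -scalemxAl mxE.
have c12 : bf A y2 y1 = bf A y1 y2 by rewrite bfT sA.
have h1 := key y1 y1; have h2 := key y2 y2; have h12 := key y1 y2.
rewrite !ev1 !ev2 c12 in h1 h2 h12.
rewrite !(bfDl, bfDr, bfZl, bfZr) c12.
set q1 := bf A y1 y1; set q2 := bf A y2 y2; set c := bf A y1 y2.
rewrite -/q1 -/q2 -/c in h1 h2 h12.
have -> : a * (a * q1) + a * (b * c) + (b * (a * c) + b * (b * q2)) = a ^+ 2 * q1 + 2 * a * b * c + b ^+ 2 * q2 by ring.
apply: (@RA _ l1 l2 _ _ _ (dotr (y1 *m A) (y1 *m A)) (dotr (y2 *m A) (y2 *m A)) (dotr (y1 *m A) (y2 *m A))) => //.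
- exact: dotr_ge0.
- exact: dotr_ge0.
- lra.
- lra.
- lra.
- exact: cs_strict.
Qed.

End Real.
Arguments bf {R n}.
Arguments dotr {R n}.
Arguments indep {R n}.
Arguments dotr_gt0 {R n}.
Arguments RL {R n}.
Arguments cs_strict {R n}.


Lemma entryD (K : zmodType) m k (X Y : 'M[K]_(m, k)) i j : (X + Y) i j = X i j + Y i j.
Proof. by rewrite mxE. Qed.
Lemma entryN (K : zmodType) m k (X : 'M[K]_(m, k)) i j : (- X) i j = - X i j.
Proof. by rewrite mxE. Qed.
Lemma entryZ (K : pzRingType) m k (a : K) (X : 'M[K]_(m, k)) i j : (a *: X) i j = a * X i j.
Proof. by rewrite mxE. Qed.

Section Cplx.
Variable (R : realType) (n : nat) (A : 'M[R]_n).
Hypothesis sA : A^T = A.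
Local Notation C := R[i].
Local Notation f := (real_complex R).
Local Notation Ac := (map_mx f A).
Local Notation P := (spectralmx Ac).
Local Notation d := (spectral_diag Ac).
Local Open Scope sesquilinear_scope.

Lemma f_real (x : R) : f x \is Num.real.
Proof. by rewrite complex_real. Qed.

Lemma Ac_herm : Ac \is hermsymmx.
Proof.
apply: realsym_hermsym.
  rewrite is_hermitianmxE expr0 scale1r map_mx_id //; apply/eqP/matrixP => i j; rewrite !mxE.
  by rewrite -[in RHS]sA mxE.
by apply/mxOverP => i j; rewrite mxE f_real.
Qed.

Lemma P_unitary : P \is unitarymx.
Proof. exact: spectral_unitarymx. Qed.

Lemma Ac_eq : Ac = P^t* *m diag_mx d *m P.
Proof.
have /orthomx_spectralP E := hermitian_normalmx Ac_herm.
by rewrite -invmx_unitary ?P_unitary.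
Qed.

Lemma d_real i : d 0 i \is Num.real.
Proof. by have /mxOverP := hermitian_spectral_diag_real Ac_herm; apply. Qed.

Lemma PPt : P *m P^t* = 1%:M.
Proof. by apply/unitarymxP; exact: P_unitary. Qed.

Lemma PtP : P^t* *m P = 1%:M.
Proof. by rewrite -invmx_unitary ?P_unitary // mulVmx // spectral_unit. Qed.


End Cplx.

Section Cplx2.
Variable (R : realType) (n : nat) (A : 'M[R]_n).
Hypothesis sA : A^T = A.
Local Notation C := R[i].
Local Notation f := (real_complex R).
Local Notation Ac := (map_mx f A).
Local Open Scope sesquilinear_scope.
Variables (P : 'M[C]_n) (d : 'rV[C]_n).
Hypothesis PPt : P *m P^t* = 1%:M.
Hypothesis PtP : P^t* *m P = 1%:M.
Hypothesis Ac_eq : Ac = P^t* *m diag_mx d *m P.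
Hypothesis d_real : forall i, d 0 i \is Num.real.

Lemma row_neq0 (i : 'I_n) : row i P != 0.
Proof.
have [Pu _] := mulmx1_unit PPt.
rewrite rowE mulmx_free_eq0 ?row_free_unit //.
by apply/eqP => /matrixP /(_ 0 i); rewrite !mxE !eqxx /= => /eqP; rewrite oner_eq0.
Qed.

Lemma EV (i : 'I_n) : eigenvalue Ac (d 0 i).
Proof.
apply/eigenvalueP; exists (row i P); last exact: row_neq0.
rewrite {1}Ac_eq !rowE !mulmxA -(mulmxA _ P) PPt mulmx1 -(rowE i (diag_mx d)) row_diag_mx.
by rewrite scalemxAl.
Qed.

Lemma EVR (r : R) : eigenvalue Ac (f r) -> eigenvalue A r.
Proof. by rewrite !eigenvalue_root_char -map_char_poly fmorph_root. Qed.

Lemma char_poly_conj (F : fieldType) m (V U D : 'M[F]_m) :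
  V *m U = 1%:M -> U *m V = 1%:M -> char_poly (V *m D *m U) = char_poly D.
Proof.
move=> VU UV; rewrite /char_poly /char_poly_mx.
set mV := map_mx polyC V; set mU := map_mx polyC U.
have e1 : mV *m mU = 1%:M by rewrite -map_mxM VU map_mx1.
have e2 : mU *m mV = 1%:M by rewrite -map_mxM UV map_mx1.
have -> : 'X%:M - map_mx polyC (V *m D *m U) = mV *m ('X%:M - map_mx polyC D) *m mU.
  rewrite mulmxBr mulmxBl !map_mxM -/mV -/mU mul_mx_scalar -scalemxAl e1 scalemx1 //.
rewrite !det_mulmx mulrC mulrA -det_mulmx e2 det1 mul1r //.
Qed.

Lemma CP : char_poly Ac = \prod_i ('X - (d 0 i)%:P).
Proof.
rewrite {1}Ac_eq char_poly_conj ?PPt ?PtP // char_poly_trig ?diag_mx_is_trig //.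
by apply: eq_bigr => i _; rewrite mxE eqxx mulr1n.
Qed.


Lemma HERM (z : 'rV[C]_n) : (z *m Ac *m z^t*) 0 0 =
  \sum_k d 0 k * ((z *m P^t*) 0 k * ((z *m P^t*) 0 k)^*).
Proof.
have E : P *m z^t* = (z *m P^t*)^t* by rewrite trmx_mul map_mxM trmxCK.
rewrite Ac_eq !mulmxA -(mulmxA _ P) E mxE; apply: eq_bigr => k _.
by rewrite mul_mx_diag !mxE; ring.
Qed.

Lemma NNEG (z : 'rV[C]_n) i0 : (forall k, k != i0 -> 0 <= d 0 k) ->
  (z *m P^t*) 0 i0 = 0 -> 0 <= (z *m Ac *m z^t*) 0 0.
Proof.
move=> hk hz; rewrite HERM; apply: sumr_ge0 => k _.
have [->|nk] := eqVneq k i0; first by rewrite hz mul0r mulr0.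
by apply: mulr_ge0; [exact: hk | exact: mul_conjC_ge0].
Qed.

Variable l : R.
Hypothesis hl : l < 0.
Hypothesis hev : eigenvalue A l.
Hypothesis huniq : forall m : R, m < 0 -> eigenvalue A m -> m = l.
Hypothesis hmup : mup l (char_poly A) = 1%N.

Lemma f_lt0 (r : R) : (f r < 0) = (r < 0).
Proof. by rewrite -(rmorph0 f) ltcR. Qed.

Lemma neg_eq k : d 0 k < 0 -> d 0 k = f l.
Proof.
have e := RRe_real (d_real k).
move=> dk; have hr : complex.Re (d 0 k) < 0 by rewrite -f_lt0 e.
have hv : eigenvalue A (complex.Re (d 0 k)) by apply: EVR; rewrite e; exact: EV.
by rewrite -e (huniq _ hr hv).
Qed.

Lemma UNIQ i j : i != j -> d 0 i < 0 -> d 0 j < 0 -> False.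
Proof.
move=> ij /neg_eq di /neg_eq dj.
have : ('X - (f l)%:P) ^+ 2 %| char_poly Ac.
  rewrite CP (bigD1 i) // (bigD1 j) 1?eq_sym //= di dj mulrA -expr2 dvdp_mulIl //.
rewrite -map_polyXsubC -rmorphXn -map_char_poly dvdp_map.
by rewrite -mup_geq ?monic_neq0 ?char_poly_monic // hmup.
Qed.

Lemma exists_neg : exists i, d 0 i < 0.
Proof.
have : root (char_poly Ac) (f l) by rewrite -map_char_poly fmorph_root -eigenvalue_root_char.
rewrite CP /root horner_prod => /prodf_eq0 [k _].
rewrite !hornerE subr_eq0 => /eqP e; exists k; by rewrite -e f_lt0.
Qed.

Lemma pos_other i0 k : d 0 i0 < 0 -> k != i0 -> d 0 k != 0 -> 0 < d 0 k.
Proof.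
move=> h0 ki dk0; rewrite lt_def dk0 /= real_leNgt ?real0 ?d_real //.
by apply/negP => dk; exact: (UNIQ _ _ ki dk h0).
Qed.

Hypothesis Aunit : A \in unitmx.

Lemma DET : \det A < 0.
Proof.
have e : f (\det A) = \prod_k d 0 k.
  rewrite -det_map_mx Ac_eq !det_mulmx mulrC mulrA -det_mulmx PPt det1 mul1r det_diag //.
have nz : \prod_k d 0 k != 0.
  by rewrite -e fmorph_eq0 -unitfE -unitmxE.
have [i0 h0] := exists_neg.
rewrite -f_lt0 e (bigD1 i0) //= pmulr_llt0 //.
apply: prodr_gt0 => k ki; apply: (pos_other _ _ h0 ki).
by apply: contra nz => /eqP dk; apply/prodf_eq0; exists k => //; rewrite dk.
Qed.


Lemma conj_real_mx m k (x : 'M[R]_(m, k)) : map_mx Num.conj (map_mx f x) = map_mx f x.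
Proof. by apply/matrixP => i j; rewrite !mxE conj_Creal // f_real. Qed.

Lemma REAL (x1 x2 : 'rV[R]_n) :
  let Z := map_mx f x1 + 'i *: map_mx f x2 in
  (Z *m Ac *m Z^t*) 0 0 = f (bf A x1 x1 + bf A x2 x2).
Proof.
move=> Z.
have Zt : Z^t* = (map_mx f x1)^T - 'i *: (map_mx f x2)^T.
  apply/matrixP => i j; rewrite !mxE rmorphD rmorphM /= conjCi !conj_Creal ?f_real //.
  by rewrite mulNr.
rewrite Zt /Z !(mulmxDl, mulmxBr, mulmxDr, mulmxBl) -!(scalemxAl, scalemxAr).
have E (xa xb : 'rV[R]_n) : (map_mx f xa *m Ac *m (map_mx f xb)^T) 0 0 = f (bf A xa xb).
  by rewrite map_trmx -!map_mxM [in LHS]mxE.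
set M11 := map_mx f x1 *m Ac *m (map_mx f x1)^T.
set M12 := map_mx f x1 *m Ac *m (map_mx f x2)^T.
set M21 := map_mx f x2 *m Ac *m (map_mx f x1)^T.
set M22 := map_mx f x2 *m Ac *m (map_mx f x2)^T.
rewrite !(entryD, entryN, entryZ) /M11 /M12 /M21 /M22 !E.
have b21 : bf A x2 x1 = bf A x1 x2 by rewrite bfT sA.
rewrite b21 rmorphD /=.
have i2 : ('i : C) * 'i = -1 by rewrite -expr2 sqrCi.
set u := f _; set v := f _; set w := f _.
by rewrite mulrA i2 mulN1r opprD addrA addrK opprK.
Qed.


Lemma Cdecomp (a : C) : a = f (complex.Re a) + 'i * f (complex.Im a).
Proof. by rewrite -complexiE -complexE. Qed.

Lemma Cneq0 (a : C) : a != 0 -> (complex.Re a != 0) || (complex.Im a != 0).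
Proof.
apply: contraR; rewrite negb_or !negbK => /andP [/eqP h1 /eqP h2].
by rewrite (Cdecomp a) h1 h2 rmorph0 mulr0 addr0.
Qed.

Lemma SL (y1 y2 : 'rV[R]_n) : exists a1 b1 a2 b2 : R,
  [|| a1 != 0, b1 != 0, a2 != 0 | b2 != 0] /\
  0 <= bf A (a1 *: y1 + b1 *: y2) (a1 *: y1 + b1 *: y2) +
       bf A (a2 *: y1 + b2 *: y2) (a2 *: y1 + b2 *: y2).
Proof.
have [i0 h0] := exists_neg.
have hk k : k != i0 -> 0 <= d 0 k.
  move=> ki; have [->//|nz] := eqVneq (d 0 k) 0.
  exact: ltW (pos_other _ _ h0 ki nz).
set Y1 := map_mx f y1; set Y2 := map_mx f y2.
set al := (Y1 *m P^t*) 0 i0; set be := (Y2 *m P^t*) 0 i0.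
pose a : C := if (al == 0) && (be == 0) then 1 else be.
pose b : C := if (al == 0) && (be == 0) then 0 else - al.
have ab0 : (a != 0) || (b != 0).
  rewrite /a /b; case: ifP => [_|]; first by rewrite oner_eq0.
  by move/negbT; rewrite negb_and oppr_eq0 => /orP [] ->; rewrite ?orbT.
have hz : ((a *: Y1 + b *: Y2) *m P^t*) 0 i0 = 0.
  rewrite mulmxDl -!scalemxAl entryD !entryZ -/al -/be /a /b.
  case: ifP => [/andP [/eqP -> /eqP ->]|_]; first by rewrite !mulr0 addr0.
  by rewrite mulNr mulrC addrN.
have := NNEG (a *: Y1 + b *: Y2) i0 hk hz.
have eZ : a *: Y1 + b *: Y2 =
   map_mx f (complex.Re a *: y1 + complex.Re b *: y2) +
   'i *: map_mx f (complex.Im a *: y1 + complex.Im b *: y2).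
  apply/matrixP => i j; rewrite !mxE (Cdecomp a) (Cdecomp b) !rmorphD !rmorphM /=.
  ring.
rewrite eZ REAL ler0c => hpos.
exists (complex.Re a), (complex.Re b), (complex.Im a), (complex.Im b); split => //.
case/orP: ab0 => /Cneq0 /orP [] ->; by rewrite ?orbT.
Qed.

End Cplx2.

Section Final.
Variable (R : realType) (n : nat).
Local Open Scope sesquilinear_scope.

Lemma KEY (A S : 'M[R]_n) (x : 'rV[R]_n) : A^T = A -> S^T = - S ->
  bf (A *m A + S) x x = dotr (x *m A) (x *m A).
Proof.
move=> sA sS.
have h : bf (A *m A + S) x x + bf (A *m A + S) x x = 2 * dotr (x *m A) (x *m A).
  rewrite {2}bfT linearD /= sS trmx_mul sA !bfD.
  rewrite /bf /dotr trmx_mul sA mulmxN mulNmx !mulmxA.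
  set t := (x *m S *m x^T); rewrite [(- t) 0 0]mxE; ring.
have : 2 * bf (A *m A + S) x x = 2 * dotr (x *m A) (x *m A) by rewrite -h; ring.
have two : (2:R) != 0 by rewrite pnatr_eq0.
by move/(mulfI two).
Qed.


Lemma UNITN (A S : 'M[R]_n) : A^T = A -> A \in unitmx -> S^T = - S ->
  (A *m A + S) \in unitmx.
Proof.
move=> sA Au sS; rewrite -row_free_unit -kermx_eq0.
apply: contraT => /rowV0Pn [x /sub_kermxP xN x0].
have := KEY _ _ x sA sS; rewrite /bf xN mul0mx mxE => /esym h.
have xA0 : x *m A = 0.
  by apply/eqP; apply: contraT => nz; move: (dotr_gt0 _ nz); rewrite h ltxx.
have Af : row_free A by rewrite row_free_unit.
by move: x0; rewrite -(mulmx_free_eq0 _ Af) xA0 eqxx.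
Qed.

Lemma DETN (A S : 'M[R]_n) : A^T = A -> A \in unitmx -> S^T = - S ->
  0 < \det (A *m A + S).
Proof.
move=> sA Au sS.
pose Q : 'M[{poly R}]_n := map_mx polyC (A *m A) + 'X *: map_mx polyC S.
pose p := \det Q.
have ev (u : R) : p.[u] = \det (A *m A + u *: S).
  rewrite /p -horner_evalE -det_map_mx; congr (\det _).
  by apply/matrixP => i j; rewrite !mxE /= /horner_eval !hornerE.
have nz (u : R) : p.[u] != 0.
  rewrite ev -unitfE -unitmxE; apply: UNITN => //.
  by rewrite linearZ /= sS scalerN.
have p0 : 0 < p.[0].
  rewrite ev scale0r addr0 det_mulmx -expr2; apply: sq_pos.
  by rewrite -unitfE -unitmxE.
have p1 : 0 < p.[1].
  rewrite ltNge; apply/negP => h.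
  have [x _ rx] := @polyrcf.poly_ivt R p 0 1 ler01 (mulr_ge0_le0 (ltW p0) h).
  by move: (nz x); rewrite -/(root p x) rx.
by move: p1; rewrite ev scale1r.
Qed.

Lemma SLA (A : 'M[R]_n) : A^T = A -> one_neg_eig_with_mult A ->
  forall y1 y2 : 'rV[R]_n, exists a1 b1 a2 b2 : R,
  [|| a1 != 0, b1 != 0, a2 != 0 | b2 != 0] /\
  0 <= bf A (a1 *: y1 + b1 *: y2) (a1 *: y1 + b1 *: y2) +
       bf A (a2 *: y1 + b2 *: y2) (a2 *: y1 + b2 *: y2).
Proof.
move=> sA [l [hl hev hu hm]] y1 y2.
exact: (@SL R n A sA _ _ (PPt R n A) (PtP R n A) (Ac_eq R n A sA) (d_real R n A sA) l hl hev hu hm y1 y2).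
Qed.

Lemma DETA (A : 'M[R]_n) : A^T = A -> A \in unitmx -> one_neg_eig_with_mult A -> \det A < 0.
Proof.
move=> sA Au [l [hl hev hu hm]].
exact: (@DET R n A _ _ (PPt R n A) (PtP R n A) (Ac_eq R n A sA) (d_real R n A sA) l hl hev hu hm Au).
Qed.

Lemma CL (A B : 'M[R]_n) : A^T = A -> A \in unitmx -> one_neg_eig_with_mult A ->
  (A *m B)^T = - (A *m B) ->
  forall (v1 v2 : 'rV[R]_n) l1 l2, v1 *m (A + B) = l1 *: v1 -> v2 *m (A + B) = l2 *: v2 ->
  l1 < 0 -> l2 < 0 -> indep v1 v2 -> False.
Proof.
move=> sA Au hA sS v1 v2 l1 l2 e1 e2 l10 l20 hi.
pose y1 := v1 *m invmx A; pose y2 := v2 *m invmx A.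
have yA1 : y1 *m A = v1 by rewrite /y1 mulmxKV.
have yA2 : y2 *m A = v2 by rewrite /y2 mulmxKV.
have N1 : y1 *m (A *m A + A *m B) = l1 *: (y1 *m A) by rewrite -mulmxDr mulmxA yA1 e1.
have N2 : y2 *m (A *m A + A *m B) = l2 *: (y2 *m A) by rewrite -mulmxDr mulmxA yA2 e2.
have hi' : indep (y1 *m A) (y2 *m A) by rewrite yA1 yA2.
have neg := RL A (A *m B) y1 y2 l1 l2 sA sS N1 N2 l10 l20 hi'.
have le0 a b : bf A (a *: y1 + b *: y2) (a *: y1 + b *: y2) <= 0.
  have [h|] := boolP ((a != 0) || (b != 0)); first exact: ltW (neg a b h).
  rewrite negb_or !negbK => /andP [/eqP -> /eqP ->].
  by rewrite !scale0r addr0 /bf !mul0mx mxE.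
have [a1 [b1 [a2 [b2 [nz hge]]]]] := SLA _ sA hA y1 y2.
have := le0 a1 b1; have := le0 a2 b2.
have : ((a1 != 0) || (b1 != 0)) || ((a2 != 0) || (b2 != 0)) by rewrite -!orbA.
case/orP => h.
- by have := neg a1 b1 h; lra.
- by have := neg a2 b2 h; lra.
Qed.

Lemma indep_distinct (M : 'M[R]_n) (v1 v2 : 'rV[R]_n) m l :
  v1 *m M = m *: v1 -> v2 *m M = l *: v2 -> v1 != 0 -> v2 != 0 -> m != l -> indep v1 v2.
Proof.
move=> e1 e2 n1 n2 ml a b h.
have h2 : (a * m) *: v1 + (b * l) *: v2 = 0.
  by rewrite -!scalerA -e1 -e2 !scalemxAl -mulmxDl h mul0mx.
have h3 : (a * (m - l)) *: v1 = ((a * m) *: v1 + (b * l) *: v2) - l *: (a *: v1 + b *: v2).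
  by apply/rowP => i; rewrite !mxE; ring.
rewrite h2 h scaler0 subr0 in h3.
move/eqP: h3; rewrite scaler_eq0 (negbTE n1) orbF mulf_eq0 subr_eq0 (negbTE ml) orbF => /eqP a0.
move: h; rewrite a0 scale0r add0r => /eqP; rewrite scaler_eq0 (negbTE n2) orbF => /eqP.
by split.
Qed.

End Final.

Arguments UNITN {R n A S}.
Arguments DETN {R n A S}.
Arguments DETA {R n A}.
Arguments CL {R n A B}.
Arguments indep_distinct {R n M v1 v2 m l}.

Theorem lemma4p4 (R : realType) (n : nat) (A B : 'M[R]_n) :
  symmetric_mx A -> A \in unitmx -> one_neg_eig_with_mult A ->
  skew_mx (A *m B) ->
  (A + B) \in unitmx /\ one_neg_eig_geom1 (A + B).
Proof.
rewrite /symmetric_mx /skew_mx => sA Au hA sS.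
have eN : A *m (A + B) = A *m A + A *m B by rewrite mulmxDr.
have Nu := UNITN sA Au sS.
have Mu : (A + B) \in unitmx by move: Nu; rewrite -eN unitmx_mul => /andP [].
split => //.
have dA := DETA sA Au hA.
have dN := DETN sA Au sS.
have dM : \det (A + B) < 0 by move: dN; rewrite -eN det_mulmx nmulr_rgt0.
set M := A + B in eN Mu dM *.
pose cp := char_poly (- M).
have c0 : cp.[0] < 0.
  rewrite horner_coef0 char_poly_det -scaleN1r detZ mulrA -exprMn mulrNN mulr1 expr1n mul1r //.
have lc : lead_coef cp = 1 by apply/monicP; exact: char_poly_monic.
have lc0 : 0 < lead_coef cp by rewrite lc ltr01.
have [K hK] := @polyrcf.poly_pinfty_gt_lc R cp lc0.
pose b := Num.max K 0.
have hb : 0 < cp.[b] by apply: lt_le_trans (hK b _); rewrite ?lc ?ltr01 // le_max lexx.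
have b0 : 0 <= b by rewrite le_max lexx orbT.
have hneg : cp.[0] * cp.[b] < 0 by rewrite pmulr_llt0.
have [x] := @polyrcf.poly_ivt R cp 0 b b0 (ltW hneg).
rewrite in_itv /= => /andP [x0 _] rx.
have xpos : 0 < x.
  rewrite lt_def x0 andbT; apply/negP => /eqP ex.
  by move: rx; rewrite ex /root (lt_eqF c0).
have evx : eigenvalue M (- x).
  have : eigenvalue (- M) x by rewrite eigenvalue_root_char.
  move/eigenvalueP => [v ev vn0]; apply/eigenvalueP; exists v => //.
  by move: ev; rewrite mulmxN scaleNr => <-; rewrite opprK.
exists (- x); split.
- by rewrite oppr_lt0.
- exact: evx.
- move=> m m0 evm; apply/eqP; apply/negP => /negP ne.
  have [v1 e1 n1] := eigenvalueP evm.
  have [v2 e2 n2] := eigenvalueP evx.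
  have hi := indep_distinct e1 e2 n1 n2 ne.
  apply: (CL sA Au hA sS _ _ _ _ e1 e2 m0 _ hi).
  by rewrite oppr_lt0.
- have r0 : \rank (eigenspace M (- x)) != 0%N by rewrite mxrank_eq0.
  apply/eqP; rewrite eqn_leq lt0n r0 andbT leqNgt; apply/negP => r2.
  set E := eigenspace M (- x) in r0 r2 *.
  set Bs := row_base E.
  have i0 : (0 < \rank E)%N by rewrite lt0n.
  pose j0 : 'I_(\rank E) := Ordinal i0.
  pose j1 : 'I_(\rank E) := Ordinal r2.
  have ev (j : 'I_(\rank E)) : row j Bs *m M = - x *: row j Bs.
    apply/eigenspaceP; apply: submx_trans (row_sub j Bs) _.
    by rewrite /Bs eq_row_base submx_refl.
  have Bf : row_free Bs by exact: row_base_free.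
  have hi : indep (row j0 Bs) (row j1 Bs).
    move=> a c h.
    have hc : (a *: (delta_mx 0 j0 : 'rV_(\rank E)) + c *: (delta_mx 0 j1 : 'rV_(\rank E))) *m Bs = 0.
      by rewrite mulmxDl -!scalemxAl -!rowE.
    move/eqP: hc; rewrite mulmx_free_eq0 // => /eqP hc.
    have := congr1 (fun X : 'rV_(\rank E) => X 0 j0) hc.
    have := congr1 (fun X : 'rV_(\rank E) => X 0 j1) hc.
    rewrite /= !mxE !eqxx /=.
    rewrite !mulr0 !mulr1 addr0 add0r => hc1 hc0; split => //.
  have xneg : - x < 0 by rewrite oppr_lt0.
  exact: (CL sA Au hA sS _ _ _ _ (ev j0) (ev j1) xneg xneg hi).
Qed.
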